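(* Let $(\tilde\Theta^n_I)$ be a congruent family of covariant $n$-tensor fields on $\mathcal M_+(I)$, $I$ ranging over finite sets. Then there is a congruent family $(\tilde\Psi^n_I)$ of the form $(\tilde\Psi^n_I)_\mu=\sum_{\mathbf P\in\mathbf{Part}(n)}a_{\mathbf P}(\|\mu\|)(\tau^{\mathbf P}_I)_\mu$ with functions $a_{\mathbf P}:(0,\infty)\to\mathbb R$, such that $(\tilde\Theta^n_I-\tilde\Psi^n_I)_{\lambda c_I}=0$ for all finite sets $I$ and all $\lambda>0$.
   Context: $\mathbf{Part}(n)$ is the set of partitions of $\{1,\dots,n\}$. For a finite set $I$: $\mathcal S(I)=\{\sum_{i\in I}x_i\delta_i\}$, $\|\sum x_i\delta_i\|=\sum|x_i|$, $\mathcal M_+(I)=\{\sum\mu_i\delta_i:\mu_i>0\}$ (tangent space $\mathcal S(I)$), $c_I:=\frac1{|I|}\sum_i\delta_i$. A covariant $n$-tensor field on $\mathcal M_+(I)$ is a continuously varying family of $n$-multilinear forms on $\mathcal S(I)$. For $\mu=\sum\mu_i\delta_i$ and $V_k=\sum_iV_k^i\delta_i$, $(\tau^m_I)_\mu(V_1,\dots,V_m)=\sum_i\mu_i^{1-m}V_1^i\cdots V_m^i$, and for $\mathbf P=\{P_1,\dots,P_l\}$, $(\tau^{\mathbf P}_I)_\mu(V_1,\dots,V_n)=\prod_i(\tau^{|P_i|}_I)_\mu((V_j)_{j\in P_i})$. A Markov kernel $K:I\to\mathcal P(I')$ between finite sets is a stochastic matrix $K(i)=\sum_{i'}K^i_{i'}\delta_{i'}$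 with $K_*(\sum x_i\delta_i)=\sum_{i,i'}K^i_{i'}x_i\delta_{i'}$; it is congruent if there is a map $\kappa:I'\to I$ with $K^i_{i'}=0$ whenever $\kappa(i')\ne i$. A family is congruent if $(\Theta_{I'})_{K_*\mu}(K_*V_1,\dots,K_*V_n)=(\Theta_I)_\mu(V_1,\dots,V_n)$ for every congruent Markov kernel $K:I\to\mathcal P(I')$ between finite sets with $K_*(\mathcal M_+(I))\subset\mathcal M_+(I')$. *)

(* Defs.v *)
From HB Require Import structures.
From mathcomp Require Import all_boot all_order all_algebra.
From mathcomp Require Import reals.
Set Implicit Arguments. Unset Strict Implicit. Unset Printing Implicit Defensive.
Import Order.TTheory GRing.Theory Num.Theory.
Local Open Scope ring_scope.

(* A finite set I is a finType.  A measure mu = sum_i mu_i delta_i and a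
   signed measure / tangent vector V = sum_i V^i delta_i are both coded by
   their coefficient functions I -> R. *)

Definition posm (R : realType) (I : finType) (mu : I -> R) : Prop :=
  forall i, 0 < mu i.

Definition norm1 (R : realType) (I : finType) (x : I -> R) : R :=
  \sum_(i : I) `|x i|.

Definition cI (R : realType) (I : finType) (lam : R) : I -> R :=
  fun _ => lam / #|I|%:R.

(* The tuple is indexed by 'I_n = {0..n-1}. *)
Definition tfamily (R : realType) (n : nat) : Type :=
  forall I : finType, (I -> R) -> ('I_n -> I -> R) -> R.

Definition upd (R : realType) (n : nat) (I : finType)
  (V : 'I_n -> I -> R) (j : 'I_n) (W : I -> R) : 'I_n -> I -> R :=
  fun k => if k == j then W else V k.

Definition multilinear_family (R : realType) (n : nat) (Th : tfamily R n) : Prop :=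
  forall (I : finType) (mu : I -> R), posm mu ->
  forall (V : 'I_n -> I -> R) (j : 'I_n) (a b : R) (W W' : I -> R),
    Th I mu (upd V j (fun i => a * W i + b * W' i))
    = a * Th I mu (upd V j W) + b * Th I mu (upd V j W').

(* mu |-> (Theta_I)_mu varies continuously on M_+(I) (for multilinear forms
   on the finite-dimensional space S(I) this is continuity of
   mu |-> (Theta_I)_mu(V) for every fixed V). *)
Definition continuous_family (R : realType) (n : nat) (Th : tfamily R n) : Prop :=
  forall (I : finType) (mu : I -> R), posm mu ->
  forall (V : 'I_n -> I -> R) (e : R), 0 < e ->
  exists2 d : R, 0 < d &
    forall mu' : I -> R, posm mu' -> (forall i, `|mu' i - mu i| < d) ->
      `|Th I mu' V - Th I mu V| < e.

Definition tensor_field_family (R : realType) (n : nat) (Th : tfamily R n) : Prop :=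
  multilinear_family Th /\ continuous_family Th.

(* Markov kernels K : I -> P(I') as stochastic matrices K i i' = K^i_{i'} *)
Definition markov (R : realType) (I I' : finType) (K : I -> I' -> R) : Prop :=
  (forall i i', 0 <= K i i') /\ (forall i, \sum_(i' : I') K i i' = 1).

Definition push (R : realType) (I I' : finType) (K : I -> I' -> R)
  (x : I -> R) : I' -> R :=
  fun i' => \sum_(i : I) K i i' * x i.

Definition congruent_kernel (R : realType) (I I' : finType)
  (K : I -> I' -> R) : Prop :=
  exists kappa : I' -> I, forall i i', kappa i' != i -> K i i' = 0.

Definition congruent_family (R : realType) (n : nat) (Th : tfamily R n) : Prop :=
  forall (I I' : finType) (K : I -> I' -> R),
    markov K -> congruent_kernel K ->
    (forall mu : I -> R, posm mu -> posm (push K mu)) ->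
    forall (mu : I -> R) (V : 'I_n -> I -> R), posm mu ->
      Th I' (push K mu) (fun j => push K (V j)) = Th I mu V.

Definition tau_block (R : realType) (n : nat) (I : finType) (mu : I -> R)
  (B : {set 'I_n}) (V : 'I_n -> I -> R) : R :=
  \sum_(i : I) mu i ^ (1 - (#|B|)%:Z) * \prod_(j in B) V j i.

Definition tauP (R : realType) (n : nat) (I : finType) (P : {set {set 'I_n}})
  (mu : I -> R) (V : 'I_n -> I -> R) : R :=
  \prod_(B in P) tau_block mu B V.

(* Part(n): partitions of {1..n} (here {0..n-1} = 'I_n) *)
Definition Part (n : nat) : pred {set {set 'I_n}} :=
  fun P => partition P [set: 'I_n].

Definition Psi (R : realType) (n : nat) (a : {set {set 'I_n}} -> R -> R)
  : tfamily R n :=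
  fun I mu V => \sum_(P | Part P) a P (norm1 mu) * tauP P mu V.
Arguments Psi [R n] a I _ _.
Arguments cI [R] I lam _.

(* Main.v *)
Require Import Defs.
From HB Require Import structures.
From mathcomp Require Import all_boot all_order all_algebra.
From mathcomp Require Import reals.
From mathcomp Require Import fingroup perm.
Require Import Defs.
From Stdlib Require Import FunctionalExtensionality.
Set Implicit Arguments. Unset Strict Implicit. Unset Printing Implicit Defensive.
Import Order.TTheory GRing.Theory Num.Theory.
Local Open Scope ring_scope.
Definition dlt (R : realType) (I : finType) (x : I) : I -> R := fun i => (i == x)%:R.
Definition ev (R : realType) (n : nat) (I : finType) (t : 'I_n -> I) : 'I_n -> I -> R :=
  fun j => dlt R (t j).

Lemma sumI (R : realType) (T : finType) (z : T) (F : T -> R) :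
  \sum_(x : T) (x == z)%:R * F x = F z.
Proof.
rewrite (bigD1 z) //= eqxx mul1r big1 ?addr0 // => x /negbTE ->; by rewrite mul0r.
Qed.

Lemma sumI' (R : realType) (T : finType) (z : T) (F : T -> R) :
  \sum_(x : T) (z == x)%:R * F x = F z.
Proof. by rewrite -(sumI z); apply: eq_bigr => x _; rewrite eq_sym. Qed.

Lemma ml_zero (R : realType) n (Th : tfamily R n) (I : finType) (mu : I -> R) :
  multilinear_family Th -> posm mu -> forall V j, Th I mu (upd V j (fun _ => 0)) = 0.
Proof.
move=> ML pm V j.
have := ML I mu pm V j 0 0 (fun _ => 0) (fun _ => 0).
by rewrite !mul0r addr0.
Qed.

Lemma ml_sum_seq (R : realType) n (Th : tfamily R n) (I : finType) (mu : I -> R) :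
  multilinear_family Th -> posm mu ->
  forall (T : Type) (r : seq T) (c : T -> R) (W : T -> I -> R) V j,
  Th I mu (upd V j (fun i => \sum_(x <- r) c x * W x i))
  = \sum_(x <- r) c x * Th I mu (upd V j (W x)).
Proof.
move=> ML pm T r c W V j.
elim: r => [|x r IH].
  rewrite big_nil.
  have -> : (fun i => \sum_(x <- [::]) c x * W x i) = (fun _ => 0).
    by apply: functional_extensionality => i; rewrite big_nil.
  exact: ml_zero.
rewrite big_cons -IH -[X in _ + X]mul1r -ML //; congr (Th I mu (upd V j _)).
by apply: functional_extensionality => i; rewrite big_cons mul1r.
Qed.

Lemma ml_sum (R : realType) n (Th : tfamily R n) (I : finType) (mu : I -> R) :
  multilinear_family Th -> posm mu ->
  forall (T : finType) (c : T -> R) (W : T -> I -> R) V j,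
  Th I mu (upd V j (fun i => \sum_(x : T) c x * W x i))
  = \sum_(x : T) c x * Th I mu (upd V j (W x)).
Proof. move=> ML pm T c W V j; exact: (ml_sum_seq ML pm (index_enum T)). Qed.

Lemma expand (R : realType) n (Th : tfamily R n) (I : finType) (mu : I -> R) :
  multilinear_family Th -> posm mu ->
  forall (T : finType) (c : 'I_n -> T -> R) (W : 'I_n -> T -> I -> R),
  Th I mu (fun j i => \sum_(x : T) c j x * W j x i)
  = \sum_(f : {ffun 'I_n -> T}) (\prod_(j : 'I_n) c j (f j)) * Th I mu (fun j => W j (f j)).
Proof.
move=> ML pm T c W.
suff H : forall k c, (forall j : 'I_n, (k <= j)%N -> exists y, c j = fun x => (x == y)%:R) ->
  Th I mu (fun j i => \sum_(x : T) c j x * W j x i)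
  = \sum_(f : {ffun 'I_n -> T}) (\prod_(j : 'I_n) c j (f j)) * Th I mu (fun j => W j (f j)).
  apply: (H n) => j nj; exfalso; by move: (ltn_ord j); rewrite ltnNge nj.
elim=> [|k IH] {}c Hc.
  have [x0 Hx0] := fin_all_exists (fun j => Hc j (leq0n j)).
  have -> : (fun j i => \sum_(x : T) c j x * W j x i) = (fun j => W j (x0 j)).
    apply: functional_extensionality => j; apply: functional_extensionality => i.
    by rewrite Hx0 sumI.
  have P1 : \prod_j c j ([ffun j => x0 j] j) = 1.
    by apply: big1 => j _; rewrite ffunE Hx0 eqxx.
  rewrite (bigD1 [ffun j => x0 j]) //= P1 mul1r.
  have -> : (fun j => W j ([ffun j => x0 j] j)) = (fun j => W j (x0 j)).
    apply: functional_extensionality => j; by rewrite ffunE.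
  rewrite big1 ?addr0 //.
  move=> f Hf.
  have : ~~ [forall j, f j == x0 j].
    apply: contra Hf => /forallP Hj; apply/eqP/ffunP => j; rewrite ffunE; exact/eqP.
  rewrite negb_forall => /existsP [j Hj].
  by rewrite (bigD1 j) //= Hx0 (negbTE Hj) !mul0r.
case: (ltnP k n) => [kn|nk]; last first.
  apply: IH => j kj; exfalso; by move: (leq_trans nk kj); rewrite leqNgt ltn_ord.
set jk := Ordinal kn.
pose c' y := fun j => if j == jk then (fun x => (x == y)%:R) else c j.
have Hc' : forall y (j : 'I_n), (k <= j)%N -> exists y', c' y j = fun x => (x == y')%:R.
  move=> y j kj; rewrite /c'; case: eqP => [_|/eqP ne]; first by exists y.
  apply: Hc; rewrite ltn_neqAle kj andbT; apply: contra ne => /eqP e.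
  by apply/eqP/val_inj; rewrite /= e.
set L := (fun j i => \sum_(x : T) c j x * W j x i).
have E : L = upd L jk (fun i => \sum_(x : T) c jk x * W jk x i).
  apply: functional_extensionality => j; rewrite /upd; by case: eqP => // ->.
rewrite E ml_sum //.
have E2 : forall y, upd L jk (W jk y) = (fun j i => \sum_(x : T) c' y j x * W j x i).
  move=> y; apply: functional_extensionality => j; rewrite /upd /c'; case: eqP => [->|//].
  apply: functional_extensionality => i; by rewrite sumI.
under eq_bigr => y _ do rewrite E2 (IH (c' y) (Hc' y)) mulr_sumr.
rewrite exchange_big; apply: eq_bigr => f _.
have Ey : forall y, c jk y * ((\prod_j c' y j (f j)) * Th I mu (fun j => W j (f j)))
   = (f jk == y)%:R * (c jk y * ((\prod_(j | j != jk) c j (f j)) * Th I mu (fun j => W j (f j)))).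
  move=> y; rewrite (bigD1 jk) //= /c' eqxx.
  rewrite (eq_bigr (fun j => c j (f j))); last by move=> j /negbTE ->.
  by rewrite mulrA mulrCA -!mulrA.
rewrite (eq_bigr _ (fun y _ => Ey y)) sumI' [in RHS](bigD1 jk) //=.
by rewrite mulrA.
Qed.

Lemma basis_expand (R : realType) n (Th : tfamily R n) (I : finType) (mu : I -> R) :
  multilinear_family Th -> posm mu -> forall V : 'I_n -> I -> R,
  Th I mu V = \sum_(f : {ffun 'I_n -> I}) (\prod_(j : 'I_n) V j (f j)) * Th I mu (ev R (fun j => f j)).
Proof.
move=> ML pm V.
rewrite -(expand ML pm V (fun j x => dlt R x)); congr (Th I mu _).
apply: functional_extensionality => j; apply: functional_extensionality => i.
rewrite /dlt -(sumI i (V j)); apply: eq_bigr => x _; by rewrite mulrC eq_sym.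
Qed.

Lemma sumI1 (R : realType) (T : finType) (z : T) : \sum_(x : T) (z == x)%:R = 1 :> R.
Proof. by rewrite -[RHS](sumI' z (fun _ => (1 : R))); apply: eq_bigr => x _; rewrite mulr1. Qed.

Lemma perm_from_seqs (I : finType) (u1 u2 : seq I) :
  uniq u1 -> uniq u2 -> size u1 = size u2 ->
  exists s : {perm I}, forall i x0, (i < size u1)%N -> s (nth x0 u1 i) = nth x0 u2 i.
Proof.
move=> U1 U2 S.
set e1 := u1 ++ [seq x <- enum I | x \notin u1].
set e2 := u2 ++ [seq x <- enum I | x \notin u2].
have Ue : forall u : seq I, uniq u -> uniq (u ++ [seq x <- enum I | x \notin u]).
  move=> u Uu; rewrite cat_uniq Uu filter_uniq ?enum_uniq // andbT.
  by apply/hasPn => x; rewrite mem_filter => /andP [].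
have Ae : forall (u : seq I) x, x \in u ++ [seq x <- enum I | x \notin u].
  by move=> u x; rewrite mem_cat mem_filter mem_enum andbT orbN.
have Se : forall u : seq I, uniq u -> size (u ++ [seq x <- enum I | x \notin u]) = #|I|.
  move=> u Uu; rewrite cardT; apply: perm_size; apply: uniq_perm; rewrite ?Ue ?enum_uniq //.
  by move=> x; rewrite Ae mem_enum.
pose f x := nth x e2 (index x e1).
have finj : injective f.
  move=> x y; rewrite /f => E.
  have ix : (index x e1 < size e2)%N by rewrite Se // -(Se _ U1) index_mem Ae.
  have iy : (index y e1 < size e2)%N by rewrite Se // -(Se _ U1) index_mem Ae.
  move: E; rewrite (set_nth_default x y iy) => /eqP; rewrite nth_uniq ?Ue // => /eqP E.
  by rewrite -(nth_index x (Ae u1 x)) E nth_index // Ae.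
exists (perm finj) => i x0 iu; rewrite permE /f.
have yu : nth x0 u1 i \in u1 by rewrite mem_nth.
rewrite index_cat yu index_uniq // nth_cat -S iu; apply: set_nth_default; by rewrite -S.
Qed.

Lemma perm_pattern (I : finType) n (t t' : 'I_n -> I) :
  (forall j j', (t j == t j') = (t' j == t' j')) ->
  exists s : {perm I}, forall j, s (t j) = t' j.
Proof.
move=> Hk.
pose fo (j : 'I_n) := [forall j0 : 'I_n, (j0 < j)%N ==> (t j0 != t j)].
set s := [seq j <- enum 'I_n | fo j].
have injs : {in s &, injective t}.
  move=> j1 j2; rewrite !mem_filter => /andP [f1 _] /andP [f2 _] E.
  case: (ltngtP j1 j2) => [lt|lt|eq].
  - by move/forallP/(_ j1): f2; rewrite lt E eqxx.
  - by move/forallP/(_ j2): f1; rewrite lt E eqxx.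
  - exact: val_inj.
have injs' : {in s &, injective t'}.
  move=> j1 j2 h1 h2 E; apply: injs => //; apply/eqP; by rewrite Hk E eqxx.
have U1 : uniq (map t s) by rewrite map_inj_in_uniq // filter_uniq // enum_uniq.
have U2 : uniq (map t' s) by rewrite map_inj_in_uniq // filter_uniq // enum_uniq.
have [sg Hsg] := perm_from_seqs U1 U2 (etrans (size_map _ _) (esym (size_map _ _))).
exists sg => j.
have [j1 j1s ej] : exists2 j1, j1 \in s & t j1 = t j.
  suff H : forall m (j : 'I_n), (j < m)%N -> exists2 j1, j1 \in s & t j1 = t j.
    exact: (H n).
  elim=> [|m IH] {}j // jm.
  case fj: (fo j); first by exists j => //; rewrite mem_filter fj mem_enum.
  move: fj; rewrite /fo => /negbT; rewrite negb_forall => /existsP [j0].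
  rewrite negb_imply negbK => /andP [j0j /eqP e0].
  have [j1 j1s e1] := IH j0 (leq_trans j0j jm).
  by exists j1 => //; rewrite e1 e0.
have ixs : (index j1 s < size s)%N by rewrite index_mem.
have := Hsg (index j1 s) (t j); rewrite size_map => /(_ ixs).
rewrite (nth_map j1) // (nth_map j1) // nth_index // ej => ->.
by apply/eqP; rewrite -Hk ej.
Qed.

Lemma posm_cI (R : realType) (I : finType) (lam : R) :
  0 < lam -> (0 < #|I|)%N -> posm (cI I lam).
Proof. by move=> l0 I0 i; rewrite /cI divr_gt0 // ltr0n. Qed.

Lemma pat_inv (R : realType) n (Th : tfamily R n) (I : finType) (lam : R) :
  congruent_family Th -> 0 < lam -> (0 < #|I|)%N ->
  forall t t' : 'I_n -> I, (forall j j', (t j == t j') = (t' j == t' j')) ->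
  Th I (cI I lam) (ev R t) = Th I (cI I lam) (ev R t').
Proof.
move=> Hc l0 I0 t t' Hk.
have [sg Hsg] := perm_pattern Hk.
pose K := fun x y : I => (sg x == y)%:R : R.
have Kp : forall (x : I -> R) y, push K x y = x ((sg^-1)%g y).
  move=> x y; rewrite /push /K -(sumI ((sg^-1)%g y) x); apply: eq_bigr => i _.
  by rewrite (canF_eq (permK sg)).
have mk : markov K.
  split=> [x y|x]; first by rewrite /K ler0n.
  exact: sumI1.
have ck : congruent_kernel K.
  exists (sg^-1)%g => x y ne; rewrite /K; case: eqP => // E.
  by rewrite -E permK eqxx in ne.
have pp : forall mu, posm mu -> posm (push K mu) by move=> mu pm y; rewrite Kp.
have := Hc I I K mk ck pp (cI I lam) (ev R t) (posm_cI l0 I0).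
have -> : push K (cI I lam) = cI I lam.
  by apply: functional_extensionality => y; rewrite Kp.
have -> : (fun j => push K (ev R t j)) = ev R t'.
  apply: functional_extensionality => j; apply: functional_extensionality => y.
  rewrite Kp /ev /dlt -Hsg; congr (_%:R).
  by rewrite (canF_eq (permKV sg)).
by move=> ->.
Qed.

Lemma push_collapse (R : realType) (I I' : finType) (K : I -> I' -> R) (kap : I' -> I) :
  (forall i i', kap i' != i -> K i i' = 0) ->
  forall x i', push K x i' = K (kap i') i' * x (kap i').
Proof.
move=> Hk x i'; rewrite /push (bigD1 (kap i')) //= big1 ?addr0 // => i Hi.
by rewrite Hk ?mul0r // eq_sym.
Qed.

Lemma kpow (R : realType) (k : R) (b : nat) : k != 0 -> k ^ (1 - b%:Z) * k ^+ b = k.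
Proof.
move=> k0; rewrite -[k ^+ b]/(k ^ (b%:Z)) -expfzDr // subrK expr1z //.
Qed.

Lemma tau_block_cong (R : realType) n (I I' : finType) (K : I -> I' -> R) :
  markov K -> congruent_kernel K -> forall mu, posm mu -> posm (push K mu) ->
  forall (B : {set 'I_n}) V,
  tau_block (push K mu) B (fun j => push K (V j)) = tau_block mu B V.
Proof.
move=> [K0 K1] [kap Hk] mu pm ppm B V.
set F := fun i => mu i ^ (1 - #|B|%:Z) * \prod_(j in B) V j i.
have kpos : forall i', K (kap i') i' != 0.
  move=> i'; have := ppm i'; rewrite (push_collapse Hk) => h; apply/eqP => E.
  by rewrite E mul0r ltxx in h.
rewrite /tau_block.
transitivity (\sum_i' push K F i').
  apply: eq_bigr => i' _; rewrite !(push_collapse Hk).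
  under eq_bigr do rewrite (push_collapse Hk).
  rewrite big_split /= prodr_const /F expfzMl.
  set k := K (kap i') i'; set m := mu (kap i') ^ _; set P := \prod_(i in B) _.
  by rewrite mulrACA (kpow _ (kpos i')).
rewrite /push exchange_big /=; apply: eq_bigr => i _; by rewrite -mulr_suml K1 mul1r.
Qed.

Lemma norm1_cong (R : realType) (I I' : finType) (K : I -> I' -> R) :
  markov K -> forall mu, posm mu -> posm (push K mu) ->
  norm1 (push K mu) = norm1 mu.
Proof.
move=> [K0 K1] mu pm ppm; rewrite /norm1.
under eq_bigr => i' _ do rewrite ger0_norm ?(ltW (ppm i')) //.
under [RHS]eq_bigr => i _ do rewrite ger0_norm ?(ltW (pm i)) //.
rewrite /push exchange_big /=; apply: eq_bigr => i _; by rewrite -mulr_suml K1 mul1r.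
Qed.

Lemma Psi_cong (R : realType) n (a : {set {set 'I_n}} -> R -> R) :
  congruent_family (Psi a).
Proof.
move=> I I' K mk ck pp mu V pm.
rewrite /Psi (norm1_cong mk pm (pp mu pm)); apply: eq_bigr => P _; congr (_ * _).
rewrite /tauP; apply: eq_bigr => B _; exact: (tau_block_cong mk ck pm (pp mu pm)).
Qed.

Lemma part_props n (P : {set {set 'I_n}}) :
  Part P -> [/\ cover P = [set: 'I_n], trivIset P & set0 \notin P].
Proof. by rewrite /Part /partition => /and3P [/eqP -> -> ->]. Qed.

Lemma part_mem n (P : {set {set 'I_n}}) j :
  Part P -> j \in pblock P j /\ pblock P j \in P.
Proof.
move=> /part_props [cov _ _]; rewrite mem_pblock pblock_mem // cov inE //.
Qed.

Lemma part_def n (P : {set {set 'I_n}}) B j :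
  Part P -> B \in P -> j \in B -> pblock P j = B.
Proof. by move=> /part_props [_ tI _]; apply: def_pblock. Qed.

Lemma part_eq n (P : {set {set 'I_n}}) j j' :
  Part P -> (pblock P j == pblock P j') = (j' \in pblock P j).
Proof. by move=> /part_props [cov tI _]; rewrite eq_pblock // cov inE. Qed.

Lemma tau_block_upd_out (R : realType) n (I : finType) (mu : I -> R) (B : {set 'I_n}) V j Y :
  j \notin B -> tau_block mu B (upd V j Y) = tau_block mu B V.
Proof.
move=> jB; rewrite /tau_block; apply: eq_bigr => i _; congr (_ * _).
apply: eq_bigr => j' j'B; rewrite /upd; case: eqP => // E.
by rewrite -E j'B in jB.
Qed.

Lemma tau_block_upd_in (R : realType) n (I : finType) (mu : I -> R) (B : {set 'I_n}) V j Y :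
  j \in B -> tau_block mu B (upd V j Y) =
  \sum_i mu i ^ (1 - #|B|%:Z) * (Y i * \prod_(j' in B | j' != j) V j' i).
Proof.
move=> jB; rewrite /tau_block; apply: eq_bigr => i _; congr (_ * _).
rewrite (bigD1 j) //= /upd eqxx; congr (_ * _).
by apply: eq_bigr => j' /andP [_ /negbTE ->].
Qed.

Lemma tauP_upd (R : realType) n (I : finType) (P : {set {set 'I_n}}) (mu : I -> R) V j Y :
  Part P -> tauP P mu (upd V j Y) =
  (\sum_i mu i ^ (1 - #|pblock P j|%:Z) * (Y i * \prod_(j' in pblock P j | j' != j) V j' i))
  * \prod_(B in P | B != pblock P j) tau_block mu B V.
Proof.
move=> HP; have [jP PP] := part_mem j HP.
rewrite /tauP (bigD1 (pblock P j)) //= tau_block_upd_in //; congr (_ * _).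
apply: eq_bigr => B /andP [BP ne]; apply: tau_block_upd_out; apply: contra ne => jB.
by rewrite (part_def HP BP jB) eqxx.
Qed.

Lemma Psi_ml (R : realType) n (a : {set {set 'I_n}} -> R -> R) :
  multilinear_family (Psi a).
Proof.
move=> I mu pm V j al be W W'.
rewrite /Psi !mulr_sumr -big_split; apply: eq_bigr => P HP.
rewrite !tauP_upd //.
set Q := fun i => \prod_(j' in pblock P j | j' != j) V j' i.
set m := fun i => mu i ^ (1 - #|pblock P j|%:Z).
have E : \sum_i m i * ((al * W i + be * W' i) * Q i)
   = al * \sum_i m i * (W i * Q i) + be * \sum_i m i * (W' i * Q i).
  rewrite !mulr_sumr -big_split; apply: eq_bigr => i _.
  by rewrite mulrDl mulrDr -!mulrA [m i * (al * _)]mulrCA [m i * (be * _)]mulrCA.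
rewrite E; set c := a P _; set X := \sum_i _; set Y := \sum_i _; set Rs := \prod_(B in P | _) _.
by rewrite mulrDl mulrDr !mulrA [c * al]mulrC [c * be]mulrC.
Qed.

Definition Dfam (R : realType) n (Th Ps : tfamily R n) : tfamily R n :=
  fun I mu V => Th I mu V - Ps I mu V.

Lemma Dfam_ml (R : realType) n (Th Ps : tfamily R n) :
  multilinear_family Th -> multilinear_family Ps -> multilinear_family (Dfam Th Ps).
Proof.
move=> M1 M2 I mu pm V j al be W W'; rewrite /Dfam M1 // M2 //.
by rewrite !mulrBr opprD addrACA.
Qed.

Lemma Dfam_cong (R : realType) n (Th Ps : tfamily R n) :
  congruent_family Th -> congruent_family Ps -> congruent_family (Dfam Th Ps).
Proof.
move=> C1 C2 I I' K mk ck pp mu V pm; by rewrite /Dfam C1 // C2.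
Qed.

Definition rk (A : finType) n (t : 'I_n -> A) := #|t @: [set: 'I_n]|.

Lemma rk_le (A : finType) n (t : 'I_n -> A) : (rk t <= n)%N.
Proof. by rewrite /rk (leq_trans (leq_imset_card _ _)) // cardsT card_ord. Qed.

Lemma Lr (A B : finType) n (w : 'I_n -> A) (u : 'I_n -> B) :
  (forall j j', w j = w j' -> u j = u j') ->
  (rk u <= rk w)%N /\ (rk u = rk w -> forall j j', u j = u j' -> w j = w j').
Proof.
move=> H.
pose p := fun j => (w j, u j).
have Ew : w @: [set: 'I_n] = fst @: (p @: [set: 'I_n]) by rewrite -imset_comp.
have Eu : u @: [set: 'I_n] = snd @: (p @: [set: 'I_n]) by rewrite -imset_comp.
have Cw : #|w @: [set: 'I_n]| = #|p @: [set: 'I_n]|.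
  rewrite Ew card_in_imset // => x y /imsetP [j _ ->] /imsetP [j' _ ->] /= E.
  by rewrite /p E (H _ _ E).
split; first by rewrite /rk Cw Eu; exact: leq_imset_card.
move=> Eq j j' E.
have inj : {in p @: [set: 'I_n] &, injective snd}.
  by apply/imset_injP; rewrite -Eu -Cw; apply/eqP; exact: Eq.
have := inj (p j) (p j') (imset_f _ (in_setT j)) (imset_f _ (in_setT j')) E.
by rewrite /p => -[].
Qed.

Definition cl n (A : eqType) (u : 'I_n -> A) (j : 'I_n) : {set 'I_n} := [set j' | u j' == u j].

Lemma cl_ker n (A : eqType) (u : 'I_n -> A) j j' : (cl u j == cl u j') = (u j == u j').
Proof.
apply/eqP/eqP => [E|E].
  have : j \in cl u j by rewrite inE.
  by rewrite E inE => /eqP.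
by apply/setP => x; rewrite !inE E.
Qed.

Lemma Zlem (R : realType) n (D : tfamily R n) (lam : R) :
  multilinear_family D -> congruent_family D -> 0 < lam ->
  (forall t : 'I_n -> {set 'I_n}, D _ (cI _ lam) (ev R t) = 0) ->
  forall I : finType, (0 < #|I|)%N -> forall V, D I (cI I lam) V = 0.
Proof.
move=> ML CF l0 H0 I I0.
have J0 : (0 < #|{set 'I_n}|)%N by apply/card_gt0P; exists set0.
have T0 : (0 < #|{: {set 'I_n} * I}|)%N by rewrite card_prod muln_gt0 J0 I0.
set m : R := #|I|%:R.
set N : R := #|{set 'I_n}|%:R.
have m0 : m != 0 by rewrite /m pnatr_eq0 -lt0n.
have N0 : N != 0 by rewrite /N pnatr_eq0 -lt0n.
have cIT : forall x : R, x / N / m = x / #|{: {set 'I_n} * I}|%:R.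
  by move=> x; rewrite card_prod natrM invfM mulrA.
pose Kf := fun (y : {set 'I_n}) (p : ({set 'I_n} * I)%type) => (y == p.1)%:R / m.
have pushKf : forall x p, push Kf x p = x p.1 / m.
  move=> x p; rewrite /push /Kf -(sumI p.1 (fun y => x y / m)).
  by apply: eq_bigr => y _; rewrite eq_sym mulrAC -mulrA.
have mKf : markov Kf.
  split=> [y p|y]; first by rewrite /Kf divr_ge0 ?ler0n.
  have -> : \sum_(p : {set 'I_n} * I) Kf y p = \sum_a \sum_(b : I) (y == a)%:R / m.
    by rewrite pair_bigA.
  rewrite (eq_bigr (fun a => (y == a)%:R * (m^-1 *+ #|I|))); last first.
    by move=> a _; rewrite sumr_const -mulrnAr.
  by rewrite sumI' -mulr_natr mulVf.
have cKf : congruent_kernel Kf.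
  by exists fst => y p ne; rewrite /Kf eq_sym (negbTE ne) mul0r.
have pKf : forall mu, posm mu -> posm (push Kf mu).
  by move=> mu pm p; rewrite pushKf divr_gt0 // ltr0n.
pose Ks := fun (x : I) (p : ({set 'I_n} * I)%type) => (x == p.2)%:R / N.
have pushKs : forall x p, push Ks x p = x p.2 / N.
  move=> x p; rewrite /push /Ks -(sumI p.2 (fun y => x y / N)).
  by apply: eq_bigr => y _; rewrite eq_sym mulrAC -mulrA.
have mKs : markov Ks.
  split=> [y p|y]; first by rewrite /Ks divr_ge0 ?ler0n.
  have -> : \sum_(p : {set 'I_n} * I) Ks y p = \sum_(b : I) \sum_(a : {set 'I_n}) (y == b)%:R / N.
    by rewrite exchange_big pair_bigA.
  rewrite (eq_bigr (fun a => (y == a)%:R * (N^-1 *+ #|{set 'I_n}|))); last first.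
    by move=> a _; rewrite sumr_const -mulrnAr.
  by rewrite sumI' -mulr_natr mulVf.
have cKs : congruent_kernel Ks.
  by exists snd => y p ne; rewrite /Ks eq_sym (negbTE ne) mul0r.
have pKs : forall mu, posm mu -> posm (push Ks mu).
  by move=> mu pm p; rewrite pushKs divr_gt0 // ltr0n.
have S1 : forall u : 'I_n -> ({set 'I_n} * I)%type,
    D _ (cI _ lam) (ev R u) = 0.
  move=> u; move: {2}(n - rk u)%N (erefl (n - rk u)%N) => d.
  elim/ltn_ind: d u => d IH u Hd.
  set i' := cl u.
  have := H0 i'.
  rewrite -(CF _ _ Kf mKf cKf pKf _ _ (posm_cI l0 J0)).
  have -> : push Kf (cI {set 'I_n} lam) = cI _ lam.
    by apply: functional_extensionality => p; rewrite pushKf /cI cIT.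
  have -> : (fun j => push Kf (ev R i' j)) =
            (fun j q => \sum_(x : I) m^-1 * dlt R (i' j, x) q).
    apply: functional_extensionality => j; apply: functional_extensionality => [[q1 q2]].
    rewrite pushKf /ev /dlt /=.
    have [->|ne] := eqVneq q1 (i' j).
      rewrite mul1r (eq_bigr (fun x => (q2 == x)%:R * m^-1)); first by rewrite sumI'.
      by move=> x _; rewrite xpair_eqE eqxx mulrC.
    rewrite mul0r big1 // => x _.
    by rewrite xpair_eqE (negbTE ne) mulr0.
  rewrite expand //; last exact: posm_cI.
  pose A := fun f : {ffun 'I_n -> I} => [forall j, forall j', (u j != u j') || (f j == f j')].
  have E : forall f : {ffun 'I_n -> I},
      D _ (cI _ lam) (fun j => dlt R (i' j, f j)) =
      if A f then D _ (cI _ lam) (ev R u) else 0.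
    move=> f.
    have kw : forall j j', ((i' j, f j) == (i' j', f j')) = (u j == u j') && (f j == f j').
      by move=> j j'; rewrite xpair_eqE cl_ker.
    case Af: (A f).
      apply: (pat_inv CF l0 T0) => j j'; rewrite kw.
      move/forallP/(_ j)/forallP/(_ j'): Af.
      by case: (u j == u j') => //= ->.
    move: Af; rewrite /A => /negbT; rewrite negb_forall => /existsP [j].
    rewrite negb_forall => /existsP [j']; rewrite negb_or negbK => /andP [uj fj].
    have ker : forall k k', (i' k, f k) = (i' k', f k') -> u k = u k'.
      by move=> k k' /eqP; rewrite kw => /andP [/eqP -> _].
    have [le eqr] := Lr ker.
    have lt : (rk u < rk (fun k => (i' k, f k)))%N.
      rewrite ltn_neqAle le andbT; apply/eqP => Er.
      have := eqr Er j j' (eqP uj) => /eqP; by rewrite kw uj (negbTE fj).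
    apply: (IH (n - rk (fun k => (i' k, f k)))%N) => //.
    rewrite -Hd; apply: ltn_sub2l => //; exact: leq_trans lt (rk_le _).
  under eq_bigr => f _ do rewrite E.
  have /card_gt0P [x0 _] := I0.
  pose f0 := [ffun _ : 'I_n => x0].
  have Af0 : A f0 by apply/forallP => j; apply/forallP => j'; rewrite !ffunE eqxx orbT.
  set X := D _ (cI _ lam) (ev R u).
  rewrite (eq_bigr (fun f => (A f)%:R * ((\prod_(j : 'I_n) m^-1) * X))); last first.
    by move=> f _; case: (A f); rewrite ?mul1r ?mul0r ?mulr0.
  rewrite -mulr_suml => /eqP; rewrite mulf_eq0 => /orP [S0|].
    have Spos : 0 < \sum_f (A f)%:R :> R.
      rewrite (bigD1 f0) //= Af0; apply: ltr_pwDl => //; apply: sumr_ge0 => f _; exact: ler0n.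
    by rewrite (negbTE (lt0r_neq0 Spos)) in S0.
  by rewrite mulf_eq0 prodr_const expf_eq0 invr_eq0 (negbTE m0) andbF /= => /eqP.
have S2 : forall V : 'I_n -> ({set 'I_n} * I)%type -> R, D _ (cI _ lam) V = 0.
  move=> V; rewrite (basis_expand ML (posm_cI l0 T0)) big1 // => f _; by rewrite S1 mulr0.
move=> V; rewrite -(CF _ _ Ks mKs cKs pKs _ V (posm_cI l0 I0)).
have -> : push Ks (cI I lam) = cI _ lam.
  by apply: functional_extensionality => p; rewrite pushKs /cI mulrAC cIT.
exact: S2.
Qed.

Definition const_on n (A : eqType) (t : 'I_n -> A) (B : {set 'I_n}) :=
  [forall j in B, forall j' in B, t j == t j'].

Lemma const_on_ker n (A A' : eqType) (t1 : 'I_n -> A) (t2 : 'I_n -> A') B :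
  (forall j j', (t1 j == t1 j') = (t2 j == t2 j')) -> const_on t1 B = const_on t2 B.
Proof.
move=> Hk; rewrite /const_on; apply: eq_forallb => j; congr (_ ==> _).
by apply: eq_forallb => j'; rewrite Hk.
Qed.

Lemma prod_bool (R : realType) (T : finType) (B : {pred T}) (P : T -> bool) :
  \prod_(j in B) (P j)%:R = [forall j in B, P j]%:R :> R.
Proof.
case: (boolP [forall j in B, P j]) => [/forallP H|].
  by apply: big1 => j jB; move/implyP: (H j) => /(_ jB) ->.
rewrite negb_forall => /existsP [j]; rewrite negb_imply => /andP [jB /negbTE Pj].
by rewrite (bigD1 j) //= Pj mul0r.
Qed.

Lemma tau_block_ev (R : realType) n (J : finType) (c : R) (B : {set 'I_n}) (t : 'I_n -> J) :
  B != set0 -> tau_block (fun _ => c) B (ev R t) = c ^ (1 - #|B|%:Z) * (const_on t B)%:R.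
Proof.
case/set0Pn => j0 j0B; rewrite /tau_block -mulr_sumr; congr (_ * _).
under eq_bigr => i _ do rewrite /ev /dlt prod_bool.
have E : forall i, [forall j in B, i == t j] = (i == t j0) && const_on t B.
  move=> i; apply/idP/idP => [/forallP H|/andP [/eqP -> /forallP H]].
    have /implyP/(_ j0B) /eqP Ei := H j0; rewrite Ei eqxx /=.
    apply/forallP => j; apply/implyP => jB; apply/forallP => j'; apply/implyP => j'B.
    have /implyP/(_ jB) /eqP <- := H j; by have /implyP/(_ j'B) := H j'.
  apply/forallP => j; apply/implyP => jB.
  by move/implyP: (H j0) => /(_ j0B) /forallP /(_ j) /implyP /(_ jB).
under eq_bigr => i _ do rewrite E.
case: (const_on t B).
  by rewrite -[RHS](sumI (t j0) (fun _ => (1 : R))); apply: eq_bigr => i _; rewrite andbT mulr1.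
by apply: big1 => i _; rewrite andbF.
Qed.

Lemma tauP_ev (R : realType) n (J : finType) (c : R) (P : {set {set 'I_n}}) (t : 'I_n -> J) :
  Part P -> tauP P (fun _ => c) (ev R t) =
  (\prod_(B in P) c ^ (1 - #|B|%:Z)) * [forall B in P, const_on t B]%:R.
Proof.
move=> /part_props [_ _ n0]; rewrite /tauP.
rewrite (eq_bigr (fun B : {set 'I_n} => c ^ (1 - #|B|%:Z) * (const_on t B)%:R)); last first.
  move=> B BP; apply: tau_block_ev; apply: contra n0 => /eqP <-; exact: BP.
by rewrite big_split /= prod_bool.
Qed.

Definition rho n (P Q : {set {set 'I_n}}) := [forall B in P, const_on (pblock Q) B].

Lemma rho_refl n (Q : {set {set 'I_n}}) : Part Q -> rho Q Q.
Proof.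
move=> HQ; apply/forallP => B; apply/implyP => BQ; apply/forallP => j; apply/implyP => jB.
apply/forallP => j'; apply/implyP => j'B.
by rewrite (part_def HQ BQ jB) (part_def HQ BQ j'B).
Qed.

Lemma part_img n (P : {set {set 'I_n}}) : Part P -> pblock P @: [set: 'I_n] = P.
Proof.
move=> HP; apply/setP => B; apply/imsetP/idP => [[j _ ->]|BP]; first by case: (part_mem j HP).
have [_ _ n0] := part_props HP.
have : B != set0 by apply: contra n0 => /eqP <-.
case/set0Pn => j jB; exists j => //; by rewrite (part_def HP BP jB).
Qed.

Lemma card_part n (P : {set {set 'I_n}}) : Part P -> #|P| = rk (pblock P).
Proof. by move=> HP; rewrite /rk part_img. Qed.

Lemma rho_card n (P Q : {set {set 'I_n}}) :
  Part P -> Part Q -> rho P Q -> P != Q -> (#|Q| < #|P|)%N.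
Proof.
move=> HP HQ rPQ ne.
have ker : forall j j', pblock P j = pblock P j' -> pblock Q j = pblock Q j'.
  move=> j j' E.
  have [jP PP] := part_mem j HP.
  have [j'P _] := part_mem j' HP.
  move/forallP/(_ (pblock P j))/implyP/(_ PP)/forallP/(_ j)/implyP/(_ jP): rPQ.
  move/forallP/(_ j')/implyP; rewrite E => /(_ j'P); exact/eqP.
have [le eqr] := Lr ker.
rewrite !card_part // ltn_neqAle le andbT; apply/eqP => Eq; apply: (negP ne).
have Epb : forall j, pblock P j = pblock Q j.
  move=> j; apply/setP => x; rewrite -part_eq // -[RHS]part_eq //.
  by apply/eqP/eqP => E; [apply: ker E | apply: (eqr Eq)].
by apply/eqP; rewrite -(part_img HP) -(part_img HQ); apply: eq_imset.
Qed.

Lemma card_part_le n (P : {set {set 'I_n}}) : Part P -> (#|P| <= n)%N.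
Proof. by move=> HP; rewrite card_part // rk_le. Qed.

Fixpoint gfuel (R : realType) n (f : {set {set 'I_n}} -> R) (d : nat) (Q : {set {set 'I_n}}) : R :=
  match d with
  | 0 => 0
  | d'.+1 => f Q - \sum_(P | Part P && rho P Q && (P != Q)) gfuel f d' P
  end.

Lemma gfuel_stab (R : realType) n (f : {set {set 'I_n}} -> R) :
  forall d P, Part P -> (n - #|P| < d)%N -> gfuel f d.+1 P = gfuel f d P.
Proof.
elim=> [|d IH] P HP // lt.
rewrite [LHS]/= [RHS]/=; congr (_ - _); apply: eq_bigr => P' /andP [/andP [HP' rP] ne].
apply: IH => //.
have lt' := rho_card HP' HP rP ne.
have le' := card_part_le HP'.
rewrite -ltnS (leq_trans _ lt) // ltnS ltn_sub2l //; exact: leq_trans lt' le'.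
Qed.

Lemma gfuel_sol (R : realType) n (f : {set {set 'I_n}} -> R) Q :
  Part Q -> \sum_(P | Part P && rho P Q) gfuel f n.+1 P = f Q.
Proof.
move=> HQ; rewrite (bigD1 Q) /=; last by rewrite HQ rho_refl.
rewrite [X in _ + X](eq_bigr (gfuel f n)); first by rewrite subrK.
move=> P /andP [/andP [HP rP] ne]; apply: gfuel_stab => //.
have lt := rho_card HP HQ rP ne.
rewrite ltn_subrL (leq_ltn_trans _ lt) //=.
exact: leq_trans (leq_ltn_trans (leq0n _) lt) (card_part_le HP).
Qed.

Unset Implicit Arguments.

Theorem lemma4p7 (R : realType) (n : nat) (Theta : tfamily R n) :
  tensor_field_family Theta -> congruent_family Theta ->
  exists a : {set {set 'I_n}} -> R -> R,
    congruent_family (Psi a) /\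
    (forall (I : finType), (0 < #|I|)%N ->
     forall lam : R, 0 < lam ->
     forall V : 'I_n -> I -> R,
       Theta I (cI I lam) V - Psi a I (cI I lam) V = 0).
Proof.
move=> [ML _] CF.
set N : R := #|{set 'I_n}|%:R.
have J0 : (0 < #|{set 'I_n}|)%N by apply/card_gt0P; exists set0.
have N0 : N != 0 by rewrite /N pnatr_eq0 -lt0n.
pose fv (x : R) (Q : {set {set 'I_n}}) := Theta _ (cI {set 'I_n} x) (ev R (pblock Q)).
pose gv (x : R) := gfuel (fv x) n.+1.
pose w (x : R) (P : {set {set 'I_n}}) := \prod_(B in P) (x / N) ^ (1 - #|B|%:Z).
pose a P x := gv x P / w x P.
exists a; split; first exact: Psi_cong.
move=> I I0 lam l0 V.
have wn0 : forall P, w lam P != 0.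
  move=> P; rewrite /w; apply/prodf_neq0 => B _.
  by apply: expfz_neq0; rewrite mulf_neq0 ?invr_eq0 // lt0r_neq0.
apply: (Zlem (Dfam_ml ML (Psi_ml a)) (Dfam_cong CF (Psi_cong a)) l0) => // t.
rewrite /Dfam; apply/eqP; rewrite subr_eq0; apply/eqP.
set Q := preim_partition t [set: 'I_n].
have HQ : Part Q by exact: preim_partitionP.
have eqi : {in [set: 'I_n] & &, equivalence_rel (fun x y => t x == t y)}.
  by move=> x y z _ _ _; split=> // /eqP ->.
have kerQ : forall j j', (pblock Q j == pblock Q j') = (t j == t j').
  by move=> j j'; rewrite part_eq // (pblock_equivalence_partition eqi) ?inE.
rewrite (pat_inv CF l0 J0 (t' := pblock Q)); last by move=> j j'; rewrite kerQ.
rewrite -/(fv lam Q) -(gfuel_sol _ HQ).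
have nrm : norm1 (cI {set 'I_n} lam) = lam.
  rewrite /norm1 (eq_bigr (fun _ => lam / N)); last first.
    by move=> i _; rewrite /cI ger0_norm // divr_ge0 // ?ler0n // ltW.
  by rewrite sumr_const -mulr_natr divfK.
rewrite /Psi nrm big_mkcondr /=; apply: eq_bigr => P HP.
rewrite /cI tauP_ev // -/(w lam P) /a mulrA divfK //.
rewrite (_ : [forall B in P, const_on t B] = rho P Q); last first.
  rewrite /rho; apply: eq_forallb => B; congr (_ ==> _); apply: const_on_ker => j j'.
  by rewrite kerQ.
by case: (rho P Q); rewrite ?mulr1 ?mulr0.
Qed.
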